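(* For every $n\ge3$ and every integer $k$ with $1<k<n$ there exists a positive semidefinite $n\times n$ matrix of rank $k$ which is perfect copositive.
   Context: $\mathcal{S}^n$: real symmetric $n\times n$ matrices; $B[v]=v^\top Bv$; $\mathcal{COP}^n=\{B\in\mathcal{S}^n: B[x]\ge0\ \forall x\in\mathbb{R}^n_{\ge0}\}$; strictly copositive means lying in the interior of $\mathcal{COP}^n$. $\min_{\mathcal{COP}}B=\inf\{B[v]: v\in\mathbb{Z}^n_{\ge0}\setminus\{0\}\}$, $\operatorname{Min}_{\mathcal{COP}}B=\{v\in\mathbb{Z}^n_{\ge0}: B[v]=\min_{\mathcal{COP}}B\}$. A strictly copositive $P$ is perfect copositive if it is the unique $Q\in\mathcal{S}^n$ with $Q[v]=\min_{\mathcal{COP}}P$ for all $v\in\operatorname{Min}_{\mathcal{COP}}P$. *)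

(* Defs.v *)
From HB Require Import structures.
From mathcomp Require Import all_boot all_order all_algebra.
From mathcomp Require Import classical_sets reals.
Set Implicit Arguments. Unset Strict Implicit. Unset Printing Implicit Defensive.
Import Order.TTheory GRing.Theory Num.Theory.
Local Open Scope ring_scope.
Local Open Scope classical_set_scope.

Section CopositiveDefs.
Variables (R : realType) (n : nat).

Definition symmetric_mx (B : 'M[R]_n) : Prop := B^T = B.

Definition qform (B : 'M[R]_n) (v : 'cV[R]_n) : R := (v^T *m B *m v) 0 0.

Definition natvec (v : 'I_n -> nat) : 'cV[R]_n := \col_i (v i)%:R.

Definition copositive (B : 'M[R]_n) : Prop :=
  symmetric_mx B /\
  forall x : 'cV[R]_n, (forall i, 0 <= x i 0) -> 0 <= qform B x.

(* strictly copositive: B lies in the interior of COP^n inside S^n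
   (topology of S^n given by the entrywise max-norm; all norms are equivalent) *)
Definition strictly_copositive (B : 'M[R]_n) : Prop :=
  symmetric_mx B /\
  exists eps : R, 0 < eps /\
    forall C : 'M[R]_n, symmetric_mx C ->
      (forall i j, `|C i j - B i j| < eps) -> copositive C.

Definition minCOP (B : 'M[R]_n) : R :=
  inf [set qform B (natvec v) | v in [set v : 'I_n -> nat | exists i, v i <> 0%N]].

Definition MinCOP (B : 'M[R]_n) : set ('I_n -> nat) :=
  [set v | qform B (natvec v) = minCOP B].

Definition perfect_copositive (P : 'M[R]_n) : Prop :=
  strictly_copositive P /\
  forall Q : 'M[R]_n, symmetric_mx Q ->
    (forall v, MinCOP P v -> qform Q (natvec v) = minCOP P) -> Q = P.

Definition psd (A : 'M[R]_n) : Prop :=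
  symmetric_mx A /\ forall x : 'cV[R]_n, 0 <= qform A x.

End CopositiveDefs.

(* Main.v *)
Require Import Defs.
From mathcomp Require Import all_boot all_order all_algebra.
From mathcomp Require Import classical_sets reals.
From mathcomp Require Import ring lra zify.
Set Implicit Arguments. Unset Strict Implicit. Unset Printing Implicit Defensive.
Import Order.TTheory GRing.Theory Num.Theory.
Local Open Scope ring_scope.

Section Generic.
Variable R : realType.
Variable n : nat.

Lemma qformE (B : 'M[R]_n) x :
  qform B x = \sum_j \sum_i x i 0 * B i j * x j 0.
Proof.
rewrite /qform mxE; apply: eq_bigr => i _; rewrite mxE mulr_suml.
by apply: eq_bigr => j _; rewrite !mxE.
Qed.

Lemma qform_AtA p (A : 'M[R]_(p, n)) x :
  qform (A^T *m A) x = \sum_r ((A *m x) r 0) ^+ 2.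
Proof.
rewrite /qform !mulmxA -trmx_mul -mulmxA mxE.
by apply: eq_bigr => r _; rewrite mxE expr2.
Qed.

Lemma qformB (Q P : 'M[R]_n) x : qform (Q - P) x = qform Q x - qform P x.
Proof. by rewrite /qform mulmxBr mulmxBl !mxE. Qed.

End Generic.
Lemma sq2 N (e : 'I_N -> int) r0 :
  \sum_i e i = 0 -> e r0 != 0 -> 2 <= \sum_i e i ^+ 2.
Proof.
move=> S0 nz.
have h1 : \sum_i `|e i| <= \sum_i e i ^+ 2 by apply: ler_sum => i _; nia.
apply: le_trans h1.
rewrite (bigD1 r0) //=.
have h2 : \sum_(i | i != r0) e i = - e r0.
  by move: S0; rewrite (bigD1 r0) //= => /eqP; rewrite addrC addr_eq0 => /eqP.
have h3 : `|\sum_(i | i != r0) e i| <= \sum_(i | i != r0) `|e i| := ler_norm_sum _ _ _.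
rewrite h2 normrN in h3.
have h4 : 1 <= `|e r0| by lia.
have := lerD h4 (le_trans h4 h3); apply: le_trans.
by [].
Qed.

Section Constr.
Variable R : realType.
Variables m n : nat.
Hypothesis m_gt0 : (0 < m)%N.
Hypothesis mn : (m < n)%N.

Definition prv (V : zmodType) (z : nat -> V) (r : nat) : V :=
  if r is r'.+1 then z r' else 0.

Definition ef (V : pzRingType) (z : nat -> V) (r : nat) : V :=
  if (r < m)%N then z r - prv z r
  else if r == m then z m - z m.-1 *+ 2
  else if r == m.+1 then z m.-1 - z m else 0.

Lemma ef_ext (V : pzRingType) (z z' : nat -> V) r :
  (forall c, (c <= m)%N -> z c = z' c) -> ef z r = ef z' r.
Proof.
move=> H; rewrite /ef /prv.
have Hm : z m = z' m by apply: H.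
have Hm1 : z m.-1 = z' m.-1 by apply: H; rewrite leq_pred.
case: ifP => [rm|_].
  rewrite H; last exact: ltnW.
  by case: r rm => // r rm; rewrite H // ltnW // ltnW.
by rewrite Hm Hm1.
Qed.

Lemma ef_sum (V : pzRingType) (I : finType) (F : I -> nat -> V) r :
  ef (fun c => \sum_i F i c) r = \sum_i ef (F i) r.
Proof.
rewrite /ef /prv; case: ifP => _.
  case: r => [|r]; first by rewrite subr0; apply: eq_bigr => i _; rewrite subr0.
  by rewrite sumrB.
case: ifP => _; first by rewrite -sumrMnl sumrB.
case: ifP => _; first by rewrite sumrB.
by rewrite big1.
Qed.

Lemma ef_scale (V : comPzRingType) (a : V) (F : nat -> V) r :
  ef (fun c => a * F c) r = a * ef F r.
Proof.
rewrite /ef /prv; case: ifP => _.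
  by case: r => [|r]; rewrite mulrBr ?mulr0.
case: ifP => _; first by rewrite mulrBr mulrnAr.
case: ifP => _; first by rewrite mulrBr.
by rewrite mulr0.
Qed.

Lemma ef_int (z : nat -> int) r :
  ef (fun c => (z c)%:~R : R) r = (ef z r)%:~R.
Proof.
rewrite /ef /prv; case: ifP => _.
  by case: r => [|r]; rewrite !(intrB, raddfMn, raddf0).
case: ifP => _; first by rewrite !(intrB, raddfMn, raddf0).
case: ifP => _; first by rewrite !(intrB, raddfMn, raddf0).
by rewrite raddf0.
Qed.

Lemma sum_tel (V : zmodType) (z : nat -> V) c :
  \sum_(r < c.+1) (z r - prv z r) = z c.
Proof.
elim: c => [|c IH]; first by rewrite big_ord1 subr0.
by rewrite big_ord_recr /= IH addrC subrK.
Qed.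

Lemma sum_tel' (V : zmodType) (z : nat -> V) c : (0 < c)%N ->
  \sum_(r < c) (z r - prv z r) = z c.-1.
Proof. by case: c => // c _; rewrite sum_tel. Qed.

Lemma ef_sum0 (V : comPzRingType) (z : nat -> V) :
  \sum_(r < m.+2) ef z r = 0.
Proof.
rewrite !big_ord_recr /=.
have -> : \sum_(i < m) ef z i = z m.-1.
  rewrite -sum_tel' //.
  by apply: eq_bigr => [[i hi]] _; rewrite /ef /= hi.
rewrite /ef ltnn eqxx /= ltnNge leqnSn /= (gtn_eqF (ltnSn m)) eqxx.
by rewrite mulr2n; ring.
Qed.
Lemma ef_inj (V : comPzRingType) (z : nat -> V) :
  (forall r, (r < m.+2)%N -> ef z r = 0) -> forall c, (c <= m)%N -> z c = 0.
Proof.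
move=> H.
have Hc : forall c, (c < m)%N -> z c = 0.
  elim=> [|c IH] cm.
    by move: (H 0%N (ltn_trans m_gt0 (ltnW (ltnSn _)))); rewrite /ef /prv cm subr0.
  have := H c.+1 (ltn_trans cm (ltnW (ltnSn _))); rewrite /ef /prv cm IH ?subr0 //.
  exact: ltnW.
move=> c; rewrite leq_eqVlt => /orP [/eqP ->|]; last exact: Hc.
have := H m (ltnW (ltnSn _)); rewrite /ef ltnn eqxx (Hc m.-1); last by rewrite ltn_predL.
by rewrite mul0rn subr0.
Qed.

Definition mu (i : 'I_n) : nat := minn i m.
Definition dl (c : nat) : nat -> R := fun c' => (c' == c)%:R.
Definition Em : 'M[R]_(m.+2, m.+1) := \matrix_(r, c) ef (dl c) r.
Definition Ym : 'M[R]_(m.+1, n) := \matrix_(c, i) (mu i == c)%:R.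
Definition Lm := Em *m Ym.
Definition Pm := Lm^T *m Lm.
Definition zf (x : 'cV[R]_n) (c : nat) : R := \sum_i (mu i == c)%:R * x i 0.
Definition Fz (z : nat -> R) : R := \sum_(r < m.+2) ef z r ^+ 2.

Lemma sum_delta (f : nat -> R) N c : (c < N)%N ->
  \sum_(i < N) f i * (c == i)%:R = f c.
Proof.
move=> cN; rewrite (bigD1 (Ordinal cN)) //= eqxx mulr1 big1 ?addr0 //.
move=> i; rewrite -val_eqE /= eq_sym => /negbTE ->; by rewrite mulr0.
Qed.

Lemma Ymx x (c : 'I_m.+1) : (Ym *m x) c 0 = zf x c.
Proof. by rewrite mxE; apply: eq_bigr => i _; rewrite mxE. Qed.

Lemma Lm_mul x r : (Lm *m x) r 0 = ef (zf x) r.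
Proof.
rewrite /Lm -mulmxA mxE.
transitivity (\sum_(c < m.+1) ef (fun c' => zf x c * dl c c') r).
  by apply: eq_bigr => c _; rewrite mxE ef_scale mulrC Ymx.
rewrite -ef_sum; apply: ef_ext => c' c'm.
by rewrite (sum_delta (zf x)).
Qed.

Lemma qformP x : qform Pm x = Fz (zf x).
Proof. by rewrite /Pm qform_AtA; apply: eq_bigr => r _; rewrite Lm_mul. Qed.

Lemma Pm_sym : symmetric_mx Pm.
Proof. by rewrite /symmetric_mx /Pm trmx_mul trmxK. Qed.

Lemma Fz_ge0 z : 0 <= Fz z.
Proof. by apply: sumr_ge0 => r _; rewrite sqr_ge0. Qed.

Lemma Pm_psd : psd Pm.
Proof. by split; [exact: Pm_sym | move=> x; rewrite qformP Fz_ge0]. Qed.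

Definition yf (y : 'cV[R]_m.+1) (c' : nat) : R :=
  \sum_(c < m.+1) y c 0 * (c' == c)%:R.

Lemma Em_mul y r : (Em *m y) r 0 = ef (yf y) r.
Proof.
rewrite mxE /yf ef_sum; apply: eq_bigr => c _.
by rewrite mxE (ef_scale _ (dl c)) mulrC.
Qed.

Lemma EtE_rank : \rank (Em^T *m Em) = m.+1.
Proof.
set A := Em^T *m Em.
apply/eqP; rewrite eqn_leq rank_leq_row /=; rewrite leqNgt; apply/negP => Hlt.
have Hk : kermx A != 0.
  by rewrite -mxrank_eq0 mxrank_ker -lt0n subn_gt0.
have [i Hi] : exists i, row i (kermx A) != 0.
  apply/existsP; apply: contraR Hk; rewrite negb_exists => /forallP H.
  apply/eqP/row_matrixP => i; rewrite row0; exact/eqP/negPn.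
set u := row i (kermx A) in Hi.
have uA : u *m A = 0 by rewrite /u -row_mul mulmx_ker row0.
have Hq : qform A u^T = 0.
  by rewrite /qform trmxK uA mul0mx mxE.
rewrite /A qform_AtA in Hq.
have H0 := psumr_eq0P (fun r _ => sqr_ge0 _) Hq.
have Hef : forall r, (r < m.+2)%N -> ef (yf u^T) r = 0.
  move=> r hr; have := H0 (Ordinal hr) isT; rewrite Em_mul /=.
  by move/eqP; rewrite sqrf_eq0 => /eqP.
have := ef_inj Hef; move=> Hz.
move: Hi; apply/negP/negPn/eqP/rowP => c; rewrite mxE.
have := Hz c (ltn_ord c); rewrite /yf (bigD1 c) //= eqxx mulr1 big1 ?addr0.
  by rewrite !mxE => ->.
move=> j; rewrite -val_eqE /= eq_sym => /negbTE ->; by rewrite mulr0.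
Qed.

Definition Zm : 'M[R]_(n, m.+1) := \matrix_(i, c) (i == c :> nat)%:R.

Lemma YZ : Ym *m Zm = 1%:M.
Proof.
apply/matrixP => c c'; rewrite !mxE.
have c'n : (c' < n)%N by apply: leq_trans (ltn_ord c') _.
rewrite (bigD1 (Ordinal c'n)) //= big1 ?addr0.
  rewrite /Ym /Zm !mxE /mu /=.
  have -> : minn c' m = c' by apply/minn_idPl; exact: (ltn_ord c').
  by rewrite eqxx mulr1 eq_sym.
move=> j hj; rewrite /Zm !mxE (_ : (j == c' :> nat) = false) ?mulr0 //.
by apply: contraNF hj => /eqP e; apply/eqP/val_inj.
Qed.

Lemma Pm_rank : \rank Pm = m.+1.
Proof.
apply/eqP; rewrite eqn_leq; apply/andP; split.
  rewrite /Pm /Lm trmx_mul -!mulmxA.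
  apply: leq_trans (mxrankM_maxl _ _) _; exact: rank_leq_col.
rewrite -{1}EtE_rank.
have -> : Em^T *m Em = Zm^T *m Pm *m Zm.
  by rewrite /Pm /Lm trmx_mul !mulmxA -trmx_mul YZ trmx1 mul1mx -!mulmxA YZ mulmx1.
apply: leq_trans (mxrankM_maxl _ _) _; exact: mxrankM_maxr.
Qed.

Definition zn (v : 'I_n -> nat) (c : nat) : nat := (\sum_i (mu i == c) * v i)%N.

Lemma zf_nat (v : 'I_n -> nat) c :
  zf (natvec R v) c = ((zn v c)%:Z)%:~R.
Proof.
rewrite /zf /zn -pmulrn natr_sum; apply: eq_bigr => i _.
by rewrite mxE natrM.
Qed.

Lemma qform_nat (v : 'I_n -> nat) :
  qform Pm (natvec R v) =
  (\sum_(r < m.+2) ef (fun c => (zn v c)%:Z) r ^+ 2)%:~R.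
Proof.
rewrite qformP /Fz rmorph_sum; apply: eq_bigr => r _.
rewrite (@ef_ext _ _ (fun c => ((zn v c)%:Z)%:~R)); last by move=> c _; rewrite zf_nat.
by rewrite ef_int rmorphXn.
Qed.

Lemma qform_ge2 (v : 'I_n -> nat) : (exists i, v i <> 0%N) ->
  2 <= qform Pm (natvec R v).
Proof.
move=> [i0 hi0]; rewrite qform_nat.
set zi := fun c => (zn v c)%:Z.
have hz : zi (mu i0) != 0.
  rewrite /zi /zn eqz_nat -lt0n (bigD1 i0) //= eqxx mul1n.
  by apply: leq_trans (leq_addr _ _); rewrite lt0n; apply/eqP.
have [r hr] : exists r : 'I_m.+2, ef zi r != 0.
  apply/existsP; apply: contraR hz; rewrite negb_exists => /forallP H.
  apply/eqP; apply: (@ef_inj _ zi) => [r hr|]; last exact: geq_minr.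
  by have := H (Ordinal hr); move/negPn/eqP.
have := sq2 (ef_sum0 zi) hr.
rewrite -(ler_int R) => /le_trans; apply; by [].
Qed.

Lemma ef_shape a b (t : int) (z : nat -> int) :
  (a <= b)%N -> (b <= m)%N ->
  (forall c, (c <= m)%N -> z c = ((a <= c)%N && (c < b)%N)%:Z + t * (c == m)%:Z) ->
  forall r, ef z r = if (r < m)%N then (r == a)%:Z - (r == b)%:Z
            else if r == m then t - (((a < b)%N && (b == m))%:Z) *+ 2
            else if r == m.+1 then ((a < b)%N && (b == m))%:Z - t else 0.
Proof.
move=> ab bm Hz r; rewrite /ef /prv.
case: ifP => rm.
  rewrite Hz ?(ltnW rm) // (ltn_eqF rm) mulr0 addr0.
  case: r rm => [|r] rm; first by lia.
  rewrite Hz ?(ltnW (ltnW rm)) // (ltn_eqF (ltnW rm)) mulr0 addr0.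
  lia.
case: ifP => [_|_].
  have hm1 : (m.-1 == m) = false by rewrite ltn_eqF // ltn_predL.
  rewrite !Hz ?leq_pred // eqxx hm1 mulr0 addr0 mulr1.
  lia.
case: ifP => // _.
have hm1 : (m.-1 == m) = false by rewrite ltn_eqF // ltn_predL.
rewrite !Hz ?leq_pred // eqxx hm1 mulr0 addr0 mulr1.
lia.
Qed.

Definition Iv (a b : nat) : 'I_n -> nat := fun i => ((a <= i)%N && (i < b)%N) : nat.
Definition dv (g : 'I_n) : 'I_n -> nat := fun i => (i == g) : nat.
Definition addv (f g : 'I_n -> nat) : 'I_n -> nat := fun i => (f i + g i)%N.

Lemma zn_add f g c : zn (addv f g) c = (zn f c + zn g c)%N.
Proof. by rewrite /zn -big_split; apply: eq_bigr => i _; rewrite /addv mulnDr. Qed.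

Lemma zn_lt v c : (c < m)%N -> zn v c = (\sum_(i : 'I_n) (i == c :> nat) * v i)%N.
Proof.
move=> cm; apply: eq_bigr => i _; rewrite /mu.
by have -> : (minn i m == c) = (i == c :> nat) by lia.
Qed.

Lemma zn_m v : zn v m = (\sum_(i : 'I_n) (m <= i) * v i)%N.
Proof.
apply: eq_bigr => i _; rewrite /mu.
by have -> : (minn i m == m) = (m <= i)%N by lia.
Qed.

Lemma sum_pick (f : 'I_n -> nat) c (hc : (c < n)%N) :
  (\sum_(i : 'I_n) (i == c :> nat) * f i)%N = f (Ordinal hc).
Proof.
rewrite (bigD1 (Ordinal hc)) //= eqxx mul1n big1 ?addn0 // => i hi.
rewrite (_ : (i == c :> nat) = false) //.
by apply: contraNF hi => /eqP e; apply/eqP/val_inj.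
Qed.

Lemma zn_Iv a b c : (c <= m)%N -> (b <= m)%N ->
  zn (Iv a b) c = ((a <= c)%N && (c < b)%N).
Proof.
move=> cm bm; have [cm'|cm'] := ltnP c m.
  by rewrite zn_lt // (sum_pick _ (ltn_trans cm' mn)).
have -> : c = m by apply/eqP; rewrite eqn_leq cm cm'.
rewrite zn_m big1.
  by rewrite (_ : (m < b)%N = false) ?andbF //; apply/negbTE; rewrite -leqNgt.
by move=> i _; rewrite /Iv; lia.
Qed.

Lemma zn_dv (g : 'I_n) c : (c <= m)%N -> (m <= g)%N -> zn (dv g) c = (c == m).
Proof.
move=> cm mg; have [cm'|cm'] := ltnP c m.
  rewrite zn_lt // (sum_pick _ (ltn_trans cm' mn)) /dv /=.
  rewrite (_ : (c == m) = false); last by lia.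
  by rewrite (_ : Ordinal _ == g = false) // -val_eqE /=; lia.
have -> : c = m by apply/eqP; rewrite eqn_leq cm cm'.
rewrite zn_m eqxx (bigD1 g) //= /dv eqxx mg big1 // => i hi.
by rewrite (negbTE hi) muln0.
Qed.

Lemma sum_ind N p : (p < N)%N -> \sum_(r < N) ((r == p :> nat) : int) = 1.
Proof.
move=> hp; rewrite (bigD1 (Ordinal hp)) //= eqxx big1 ?addr0 // => i hi.
rewrite (_ : (i == p :> nat) = false) //.
by apply: contraNF hi => /eqP e; apply/eqP/val_inj.
Qed.

Lemma Fz_patt (z : nat -> int) p q : (p < m.+2)%N -> (q < m.+2)%N ->
  (forall r, (r < m.+2)%N -> ef z r ^+ 2 = (r == p)%:Z + (r == q)%:Z) ->
  \sum_(r < m.+2) ef z r ^+ 2 = 2.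
Proof.
move=> hp hq H; rewrite (eq_bigr (fun r : 'I_m.+2 => (r == p :> nat)%:Z + (r == q :> nat)%:Z)).
  by rewrite big_split /= !sum_ind.
by move=> r _; rewrite H.
Qed.

Lemma fam1 a b : (a < b)%N -> (b < m)%N -> qform Pm (natvec R (Iv a b)) = 2.
Proof.
move=> ab bm; rewrite qform_nat.
set z := fun c => (zn (Iv a b) c)%:Z.
have Hz : forall c, (c <= m)%N ->
    z c = ((a <= c)%N && (c < b)%N)%:Z + 0 * (c == m)%:Z.
  by move=> c hc; rewrite /z zn_Iv ?mul0r ?addr0 // ltnW.
rewrite (Fz_patt (p:=a) (q:=b)) //; try lia.
move=> r hr; rewrite (ef_shape (ltnW ab) (ltnW bm) Hz).
repeat (case: ifP => ?); try nia; try lia.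
Qed.

Lemma fam2 a (g : 'I_n) : (a < m)%N -> (m <= g)%N ->
  qform Pm (natvec R (addv (Iv a m) (dv g))) = 2.
Proof.
move=> am mg; rewrite qform_nat.
set z := fun c => (zn _ c)%:Z.
have Hz : forall c, (c <= m)%N ->
    z c = ((a <= c)%N && (c < m)%N)%:Z + 1 * (c == m)%:Z.
  by move=> c hc; rewrite /z zn_add zn_Iv // zn_dv // mul1r PoszD.
rewrite (Fz_patt (p:=a) (q:=m)) //; try lia.
move=> r hr; rewrite (ef_shape (ltnW am) (leqnn m) Hz).
repeat (case: ifP => ?); try nia; try lia.
Qed.

Lemma fam3 a (g h : 'I_n) : (a < m)%N -> (m <= g)%N -> (m <= h)%N ->
  qform Pm (natvec R (addv (addv (Iv a m) (dv g)) (dv h))) = 2.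
Proof.
move=> am mg mh; rewrite qform_nat.
set z := fun c => (zn _ c)%:Z.
have Hz : forall c, (c <= m)%N ->
    z c = ((a <= c)%N && (c < m)%N)%:Z + 2 * (c == m)%:Z.
  move=> c hc; rewrite /z !zn_add zn_Iv // !zn_dv // !PoszD.
  by case: (c == m); rewrite ?mulr1 ?mulr0 ?addr0 // addrA.
rewrite (Fz_patt (p:=a) (q:=m.+1)) //; try lia.
move=> r hr; rewrite (ef_shape (ltnW am) (leqnn m) Hz).
repeat (case: ifP => ?); try nia; try lia.
Qed.

Lemma fam4 (g : 'I_n) : (m <= g)%N -> qform Pm (natvec R (dv g)) = 2.
Proof.
move=> mg; rewrite qform_nat.
set z := fun c => (zn _ c)%:Z.
have Hz : forall c, (c <= m)%N ->
    z c = ((m <= c)%N && (c < m)%N)%:Z + 1 * (c == m)%:Z.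
  by move=> c hc; rewrite /z zn_dv // mul1r; rewrite (_ : (m <= c)%N && (c < m)%N = false) //; lia.
rewrite (Fz_patt (p:=m) (q:=m.+1)) //; try lia.
move=> r hr; rewrite (ef_shape (leqnn m) (leqnn m) Hz).
repeat (case: ifP => ?); try nia; try lia.
Qed.

Definition m0 : 'I_n := Ordinal mn.

Lemma minCOP_Pm : minCOP Pm = 2.
Proof.
rewrite /minCOP.
set S := (X in inf X).
have lb : lbound S 2.
  by move=> y [v [i hi] <-]; apply: qform_ge2; exists i.
have inS : S 2.
  exists (dv m0); first by exists m0; rewrite /dv eqxx.
  by apply: fam4.
apply/le_anti/andP; split.
  by apply: ge_inf inS; exists 2.
by apply: lb_le_inf => //; exists 2.
Qed.

Lemma sum_zf (x : 'cV[R]_n) : \sum_i x i 0 = \sum_(c < m.+1) zf x c.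
Proof.
rewrite /zf exchange_big /=; apply: eq_bigr => i _.
rewrite -mulr_suml.
have -> : \sum_(c < m.+1) ((mu i == c)%:R : R) = 1.
  have hi : (mu i < m.+1)%N by rewrite ltnS geq_minr.
  rewrite (bigD1 (Ordinal hi)) //= eqxx big1 ?addr0 // => c hc.
  rewrite (_ : (mu i == c) = false) //.
  by apply: contraNF hc => /eqP e; apply/eqP/val_inj.
by rewrite mul1r.
Qed.

Lemma ef_le (z : nat -> R) r : (r < m.+2)%N -> `|ef z r| <= Num.sqrt (Fz z).
Proof.
move=> hr.
have h1 : ef z r ^+ 2 <= Fz z.
  rewrite /Fz (bigD1 (Ordinal hr)) //= lerDl.
  by apply: sumr_ge0 => i _; rewrite sqr_ge0.
have h2 := sqr_sqrtr (Fz_ge0 z).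
have h3 := sqrtr_ge0 (Fz z).
set s := Num.sqrt (Fz z) in h2 h3 *.
have h4 : `|ef z r| ^+ 2 <= s ^+ 2 by rewrite h2 real_normK ?num_real.
have h5 := normr_ge0 (ef z r).
nra.
Qed.

Lemma z_bound (z : nat -> R) c0 : (c0 <= m)%N ->
  `|z c0| <= m.+1%:R * Num.sqrt (Fz z).
Proof.
set s := Num.sqrt (Fz z).
have s0 : 0 <= s by apply: sqrtr_ge0.
have Hc : forall c, (c < m)%N -> `|z c| <= c.+1%:R * s.
  elim=> [|c IH] cm.
    have := ef_le z (ltn_trans cm (ltnW (ltnSn _))).
    by rewrite /ef /prv cm subr0 mul1r.
  have := ef_le z (r:=c.+1) (ltn_trans cm (ltnW (ltnSn _))).
  rewrite /ef /prv cm => h.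
  have := IH (ltnW cm) => h'.
  have -> : z c.+1 = (z c.+1 - z c) + z c by rewrite subrK.
  apply: le_trans (ler_normD _ _) _.
  by rewrite -(addn1 c.+1) natrD mulrDl mul1r addrC lerD.
move=> cm; have [cm'|cm'] := ltnP c0 m.
  apply: le_trans (Hc c0 cm') _; apply: ler_wpM2r => //.
  by rewrite ler_nat; apply: ltnW.
have -> : c0 = m by apply/eqP; rewrite eqn_leq cm cm'.
have := ef_le z (ltnSn m.+1).
rewrite /ef ltnNge leqnSn /= (gtn_eqF (ltnSn m)) eqxx => h.
have h' : `|z m.-1| <= m.-1.+1%:R * s by apply: Hc; rewrite ltn_predL.
rewrite prednK // in h'.
have -> : z m = z m.-1 - (z m.-1 - z m) by rewrite opprB addrC subrK.
apply: le_trans (ler_normB _ _) _.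
by rewrite -(addn1 m) natrD mulrDl mul1r lerD.
Qed.

Lemma sumx_bound (x : 'cV[R]_n) : (forall i, 0 <= x i 0) ->
  (\sum_i x i 0) ^+ 2 <= ((m.+1%:R : R) ^+ 2) ^+ 2 * Fz (zf x).
Proof.
move=> hx.
set s := Num.sqrt (Fz (zf x)).
have s0 : 0 <= s by apply: sqrtr_ge0.
have hs : s ^+ 2 = Fz (zf x) by apply: sqr_sqrtr; apply: Fz_ge0.
have h0 : 0 <= \sum_i x i 0 by apply: sumr_ge0.
have h1 : \sum_i x i 0 <= (m.+1%:R : R) ^+ 2 * s.
  rewrite sum_zf.
  apply: le_trans (_ : \sum_(c < m.+1) (m.+1%:R * s) <= _).
    apply: ler_sum => c _; apply: le_trans (ler_norm _) _.
    by apply: z_bound; rewrite -ltnS.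
  by rewrite sumr_const card_ord -(mulr_natr (m.+1%:R * s)) expr2 mulrAC.
rewrite -hs.
have h2 : 0 <= (m.+1%:R : R) ^+ 2 by apply: sqr_ge0.
nra.
Qed.

Lemma Pm_strict : strictly_copositive Pm.
Proof.
set K : R := ((m.+1%:R : R) ^+ 2) ^+ 2.
have K0 : 0 < K by rewrite /K !exprn_gt0 // ltr0n.
split; first exact: Pm_sym.
exists K^-1; split; first by rewrite invr_gt0.
move=> C symC Hc; split => // x hx.
have E : qform C x = qform Pm x + qform (C - Pm) x by rewrite qformB addrC subrK.
have H1 : - (K^-1 * (\sum_i x i 0) ^+ 2) <= qform (C - Pm) x.
  have S2 : K^-1 * (\sum_i x i 0) ^+ 2 =
      \sum_j \sum_i K^-1 * (x i 0 * x j 0).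
    rewrite expr2 mulr_suml mulr_sumr.
    under eq_bigr do rewrite mulr_sumr mulr_sumr.
    by rewrite exchange_big.
  rewrite S2 qformE -sumrN.
  apply: ler_sum => j _; rewrite -sumrN; apply: ler_sum => i _.
  rewrite mxE.
  have := Hc i j; rewrite ltr_norml => /andP [h1 h2].
  have := hx i; have := hx j => hj hi.
  rewrite mxE.
  have h3 : 0 <= (C i j - Pm i j + K^-1) * (x i 0 * x j 0).
    by apply: mulr_ge0; [lra | exact: mulr_ge0].
  nra.
have H2 := sumx_bound hx.
rewrite E qformP.
have H3 : K^-1 * (\sum_i x i 0) ^+ 2 <= Fz (zf x).
  have e0 : 0 <= K^-1 by rewrite invr_ge0 ltW.
  apply: le_trans (ler_wpM2l e0 H2) _.
  by rewrite mulrA mulVf ?mul1r // gt_eqF.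
lra.
Qed.

Definition bf (D : 'M[R]_n) (u w : 'cV[R]_n) : R := (u^T *m D *m w) 0 0.

Lemma bf_addl D u u' w : bf D (u + u') w = bf D u w + bf D u' w.
Proof. by rewrite /bf linearD /= !mulmxDl mxE. Qed.

Lemma bf_addr D u w w' : bf D u (w + w') = bf D u w + bf D u w'.
Proof. by rewrite /bf mulmxDr mxE. Qed.

Lemma bf_sym D u w : symmetric_mx D -> bf D u w = bf D w u.
Proof.
move=> sD; rewrite /bf.
have -> : (u^T *m D *m w) 0 0 = ((u^T *m D *m w)^T) 0 0 by rewrite [RHS]mxE.
by rewrite !trmx_mul trmxK sD mulmxA.
Qed.

Lemma qform_add D u w : symmetric_mx D ->
  qform D (u + w) = qform D u + qform D w + bf D u w *+ 2.
Proof.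
move=> sD.
have -> : qform D (u + w) = bf D (u + w) (u + w) by [].
rewrite bf_addl !bf_addr (bf_sym w u sD) /qform /bf.
by rewrite mulr2n; ring.
Qed.

Lemma natvec_add f g : natvec R (addv f g) = natvec R f + natvec R g.
Proof. by apply/matrixP => i j; rewrite !mxE /addv natrD. Qed.

Lemma natvec_dv i : natvec R (dv i) = delta_mx i 0.
Proof. by apply/matrixP => i' j; rewrite !mxE /dv ord1 eqxx andbT. Qed.

Lemma bf_e D i j : bf D (natvec R (dv i)) (natvec R (dv j)) = D i j.
Proof.
rewrite !natvec_dv /bf trmx_delta -rowE -colE.
by rewrite !mxE.
Qed.

Lemma natvec_ext (f g : 'I_n -> nat) : (forall i, f i = g i) -> natvec R f = natvec R g.
Proof. by move=> H; apply/matrixP => i j; rewrite !mxE H. Qed.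

Lemma Iv_split_l (i : 'I_n) b : (i < b)%N ->
  natvec R (Iv i b) = natvec R (dv i) + natvec R (Iv i.+1 b).
Proof.
move=> ib; rewrite -natvec_add; apply: natvec_ext => k.
rewrite /Iv /dv /addv -val_eqE /=; lia.
Qed.

Lemma Iv_split_r a (j : 'I_n) : (a <= j)%N ->
  natvec R (Iv a j.+1) = natvec R (Iv a j) + natvec R (dv j).
Proof.
move=> aj; rewrite -natvec_add; apply: natvec_ext => k.
rewrite /Iv /dv /addv -val_eqE /=; lia.
Qed.

Lemma Iv_empty a b : (b <= a)%N -> natvec R (Iv a b) = 0.
Proof.
move=> ba; apply/matrixP => i j; rewrite !mxE /Iv.
by rewrite (_ : (a <= i)%N && (i < b)%N = false) //; lia.
Qed.

Lemma dv_Iv (i : 'I_n) : natvec R (dv i) = natvec R (Iv i i.+1).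
Proof. by apply: natvec_ext => k; rewrite /Iv /dv -val_eqE /=; lia. Qed.

Lemma qform0 (D : 'M[R]_n) : qform D 0 = 0.
Proof. by rewrite /qform mulmx0 mxE. Qed.

Lemma bf0l (D : 'M[R]_n) w : bf D 0 w = 0.
Proof. by rewrite /bf trmx0 !mul0mx mxE. Qed.

Lemma Pm_perfect : perfect_copositive Pm.
Proof.
split; first exact: Pm_strict.
move=> Q sQ HQ.
set D := Q - Pm.
have sD : symmetric_mx D by rewrite /symmetric_mx /D linearB /= sQ Pm_sym.
have Dsym : forall i j, D i j = D j i by move=> i j; rewrite -[in LHS]sD mxE.
have HD : forall v, qform Pm (natvec R v) = 2 -> qform D (natvec R v) = 0.
  move=> v hv; rewrite /D qformB HQ; first by rewrite minCOP_Pm hv subrr.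
  by rewrite /MinCOP /= minCOP_Pm hv.
set e := fun i => natvec R (dv i).
have G1 : forall g : 'I_n, (m <= g)%N -> qform D (e g) = 0.
  by move=> g hg; apply: HD; exact: fam4.
have G2 : forall a (g : 'I_n), (a < m)%N -> (m <= g)%N ->
    qform D (natvec R (Iv a m)) = 0 /\ bf D (natvec R (Iv a m)) (e g) = 0.
  move=> a g am mg.
  have q1 := HD _ (fam2 am mg).
  have q2 := HD _ (fam3 am mg mg).
  rewrite natvec_add in q2; rewrite (qform_add _ _ sD) q1 G1 // in q2.
  rewrite natvec_add (bf_addl D (natvec R (Iv a m))) in q2.
  have hee : bf D (e g) (e g) = 0 by apply: G1.
  rewrite /e hee addr0 add0r mulr2n in q2.
  have hb : bf D (natvec R (Iv a m)) (e g) = 0 by lra.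
  rewrite natvec_add (qform_add _ _ sD) G1 // in q1.
  rewrite /e hb mulr2n in q1.
  split => //; lra.
have G3 : forall g h : 'I_n, (m <= g)%N -> (m <= h)%N -> D g h = 0.
  move=> g h mg mh.
  have q := HD _ (fam3 m_gt0 mg mh).
  have q1 := HD _ (fam2 m_gt0 mg).
  rewrite natvec_add (qform_add _ _ sD) q1 G1 // natvec_add (bf_addl D (natvec R (Iv 0 m))) in q.
  have hb := (G2 0%N h m_gt0 mh).2; rewrite /e in hb; rewrite hb in q.
  rewrite -(bf_e D g h).
  rewrite mulr2n in q; lra.
have G4 : forall a b, (b <= m)%N -> qform D (natvec R (Iv a b)) = 0.
  move=> a b bm; have [ba|ab] := leqP b a; first by rewrite Iv_empty // qform0.
  have [bm'|bm'] := ltnP b m; first by apply: HD; apply: fam1.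
  have hbm : b = m by apply/eqP; rewrite eqn_leq bm bm'.
  move: ab; rewrite hbm => ab.
  exact: (G2 a m0 ab (leqnn m)).1.
have G5 : forall i j : 'I_n, (i <= j)%N -> (j < m)%N -> D i j = 0.
  move=> i j ij jm.
  have [ij'|ji|eij] := ltngtP i j; last first.
  - have -> : j = i by apply: val_inj.
    rewrite -(bf_e D).
    have := G4 i i.+1 (leq_ltn_trans ij jm).
    by rewrite -dv_Iv.
  - by move: ij; rewrite leqNgt ji.
  have hA := G4 i j.+1 jm.
  have hB := G4 i.+1 j.+1 jm.
  have hC := G4 i j (ltnW jm).
  have hY := G4 i.+1 j (ltnW jm).
  rewrite Iv_split_r // Iv_split_l // in hA.
  rewrite Iv_split_r // in hB.
  rewrite Iv_split_l // in hC.
  set y := natvec R (Iv i.+1 j) in hA hB hC hY.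
  rewrite (qform_add _ _ sD) hC add0r (bf_addl D (natvec R (dv i))) in hA.
  rewrite (qform_add _ _ sD) hY add0r in hB.
  rewrite -(bf_e D).
  rewrite !mulr2n in hA hB; lra.
have G6 : forall c g : 'I_n, (c < m)%N -> (m <= g)%N -> D c g = 0.
  move=> c g cm mg.
  have h1 := (G2 c g cm mg).2.
  rewrite Iv_split_l // (bf_addl D (natvec R (dv c))) in h1.
  have h2 : bf D (natvec R (Iv c.+1 m)) (e g) = 0.
    have [cm'|cm'] := ltnP c.+1 m; first exact: (G2 c.+1 g cm' mg).2.
    by rewrite Iv_empty // bf0l.
  rewrite h2 addr0 in h1.
  by rewrite -(bf_e D).
apply/matrixP => i j.
have : D i j = 0.
  have [im|im] := ltnP i m; have [jm|jm] := ltnP j m.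
  - have [ij|ji] := leqP i j; first exact: G5.
    by rewrite Dsym; apply: G5 => //; apply: ltnW.
  - exact: G6.
  - by rewrite Dsym; apply: G6.
  - exact: G3.
by rewrite /D !mxE => /eqP; rewrite subr_eq0 => /eqP.
Qed.

End Constr.
Unset Implicit Arguments.
Set Strict Implicit.

Theorem corollary5p4 (R : realType) (n k : nat) :
  (3 <= n)%N -> (1 < k)%N -> (k < n)%N ->
  exists P : 'M[R]_n, psd P /\ \rank P = k /\ perfect_copositive P.
Proof.
move=> _ hk hkn.
have m_gt0 : (0 < k.-1)%N by rewrite -ltnS prednK // ltnW.
have mn : (k.-1 < n)%N by apply: leq_ltn_trans hkn; apply: leq_pred.
exists (Pm R k.-1 n); split; first exact: Pm_psd.
split; last exact: Pm_perfect.
by rewrite Pm_rank // prednK // ltnW.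
Qed.
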